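(* Let $n\ge2$ and let $\epsilon,\phi>0$ with $\epsilon\phi=1$ and $\epsilon\ne1$. Then the eigenpairs of $T_{n,\epsilon,\phi}$ are exactly (up to scaling of eigenvectors) the following $n$ pairs: the outlier $\lambda=\epsilon+\epsilon^{-1}=\epsilon+\phi$ with eigenvector $\mathbf v=[\epsilon^{-i+1}]_{i=1}^n=[\phi^{i-1}]_{i=1}^n$; and, for $k=1,\ldots,n-1$, $\lambda_k=2\cos\theta_k$ with eigenvector $\mathbf v^{(k)}=[\sin(i\theta_k)-\epsilon\sin((i-1)\theta_k)]_{i=1}^n$, where $\theta_k=k\pi/n$. Equivalently, with $V_{n,\epsilon}=[\mathbf v\,|\,\mathbf v^{(1)}\,|\cdots|\,\mathbf v^{(n-1)}]$ (invertible), $T_{n,\epsilon,\phi}=V_{n,\epsilon}\,\mathrm{diag}\bigl(\epsilon+\epsilon^{-1},2\cos\tfrac{\pi}{n},\ldots,2\cos\tfrac{(n-1)\pi}{n}\bigr)V_{n,\epsilon}^{-1}$.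
   Context: $T_{n,\epsilon,\phi}$ is the real symmetric tridiagonal $n\times n$ matrix with diagonal entries $(\epsilon,0,\ldots,0,\phi)$ and all sub- and super-diagonal entries equal to $1$. An outlier is an eigenvalue not in $[-2,2]$. *)

(* Defs.v *)
From HB Require Import structures.
From mathcomp Require Import all_boot all_order all_algebra.
From mathcomp Require Import all_classical all_reals all_analysis.
Set Implicit Arguments. Unset Strict Implicit. Unset Printing Implicit Defensive.
Import Order.TTheory GRing.Theory Num.Theory.
Local Open Scope ring_scope.

(* Indices are 0-based: row/column i : 'I_n corresponds to the paper's i+1. *)

Definition Tmat (R : realType) (n : nat) (eps phi : R) : 'M[R]_n :=
  \matrix_(i < n, j < n)
    if i == j :> nat then
      (if i == 0%N :> nat then eps else if i == n.-1 :> nat then phi else 0)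
    else if ((i.+1 == j :> nat) || (j.+1 == i :> nat)) then 1 else 0.

Definition theta (R : realType) (n k : nat) : R := k%:R * pi / n%:R.

(* V_{n,eps} = [v | v^(1) | ... | v^(n-1)]:
   column 0: v_i = eps^{-i+1} (paper, 1-based i), i.e. eps^-1 ^+ i (0-based);
   column k >= 1: v^(k)_i = sin(i theta_k) - eps sin((i-1) theta_k). *)
Definition Vmat (R : realType) (n : nat) (eps : R) : 'M[R]_n :=
  \matrix_(i < n, j < n)
    if j == 0%N :> nat then eps^-1 ^+ i
    else sin (i.+1%:R * theta R n j) - eps * sin (i%:R * theta R n j).

Definition eigval (R : realType) (n : nat) (eps : R) (j : nat) : R :=
  if j == 0%N then eps + eps^-1 else 2 * cos (theta R n j).

Definition Dmat (R : realType) (n : nat) (eps : R) : 'M[R]_n :=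
  diag_mx (\row_(j < n) eigval n eps j).

Definition outlier (R : realType) (lam : R) : Prop := ~ (-2 <= lam <= 2).

(* Main.v *)
Require Import Defs.
From HB Require Import structures.
From mathcomp Require Import all_boot all_order all_algebra.
From mathcomp Require Import all_classical all_reals all_analysis.
From mathcomp Require Import ring lra.
Import Order.TTheory GRing.Theory Num.Theory.
Local Open Scope ring_scope.

Section S.
Context {R : realType}.

Lemma sin_rec (x : R) (m : nat) :
  sin (m.+2%:R * x) + sin (m%:R * x) = 2 * cos x * sin (m.+1%:R * x).
Proof.
have -> : m.+2%:R * x = m.+1%:R * x + x by rewrite -[m.+2]addn1 natrD; ring.
have -> : m%:R * x = m.+1%:R * x - x by rewrite -[m.+1]addn1 natrD; ring.
rewrite sinD sinB; ring.
Qed.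

Lemma sin_natpi (k : nat) : sin (k%:R * pi) = 0 :> R.
Proof.
elim: k => [|k IH]; first by rewrite mul0r sin0.
by rewrite -addn1 natrD mulrDl mul1r sinDpi IH oppr0.
Qed.

Lemma theta_n (n k : nat) : (0 < n)%N -> n%:R * theta R n k = k%:R * pi.
Proof. move=> n0; rewrite /theta; field; by rewrite pnatr_eq0 -lt0n. Qed.

Lemma theta_range (n k : nat) : (0 < k)%N -> (k < n)%N -> 0 < theta R n k < pi.
Proof.
move=> k0 kn; rewrite /theta.
have n0 : (0 : R) < n%:R by rewrite ltr0n (leq_trans k0 (ltnW kn)).
apply/andP; split.
  by rewrite divr_gt0 // mulr_gt0 ?pi_gt0 // ltr0n.
rewrite ltr_pdivrMr // mulrC ltr_pM2l ?pi_gt0 // ltr_nat //.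
Qed.

Lemma sum_delta (n a : nat) (f : nat -> R) :
  \sum_(k < n) ((k : nat) == a)%:R * f k = (a < n)%:R * f a.
Proof.
elim: n => [|n IH]; first by rewrite big_ord0 ltn0 mul0r.
rewrite big_ord_recr /= IH.
case: (ltngtP a n) => [h|h|->].
- by rewrite ltnS (ltnW h) mul0r addr0.
- by rewrite ltnS leqNgt h /= !mul0r addr0.
- by rewrite ltnSn mul0r add0r.
Qed.

Lemma sum_delta_pred (n i : nat) (f : nat -> R) : (i < n)%N ->
  \sum_(k < n) ((k.+1 : nat) == i)%:R * f k = (0 < i)%:R * f i.-1.
Proof.
case: i => [|i] hi.
  by rewrite big1 ?mul0r // => k _; rewrite mul0r.
by rewrite (eq_bigr (fun k : 'I_n => ((k:nat) == i)%:R * f k)) ?sum_delta ?(ltnW hi) // => k _; rewrite eqSS.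
Qed.

Definition dg (n : nat) (eps phi : R) (i : nat) : R :=
  if i == 0%N then eps else if i == n.-1 then phi else 0.

Lemma Tmul (n : nat) (eps phi : R) (f : nat -> R) (i : 'I_n) :
  (Tmat n eps phi *m (\col_(k < n) f k)) i 0 =
  dg n eps phi i * f i + (i.+1 < n)%:R * f i.+1 + (0 < i)%:R * f i.-1.
Proof.
rewrite mxE.
rewrite (eq_bigr (fun k : 'I_n => ((k : nat) == i)%:R * (dg n eps phi i * f k)
   + ((k : nat) == i.+1)%:R * f k + ((k.+1 : nat) == i)%:R * f k)); last first.
  move=> k _; rewrite !mxE /dg eq_sym.
  case: (eqVneq (k : nat) i) => [->|hki].
  by rewrite (ltn_eqF (ltnSn i)) (gtn_eqF (ltnSn i)) !mul0r !addr0 mul1r.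
  rewrite mul0r add0r (eq_sym (k:nat)).
  case: (eqVneq (i.+1) (k : nat)) => [<-|h1] /=.
    by rewrite (gtn_eqF (leqnSn i.+1)) mul0r addr0 mul1r.
  by case: (k.+1 == i :> nat); rewrite ?mul1r ?mul0r ?add0r ?addr0.
rewrite !big_split /=.
rewrite (sum_delta n i (fun k => dg n eps phi i * f k)) sum_delta sum_delta_pred // ltn_ord mul1r.
done.
Qed.

Lemma eig_gen (n : nat) (eps phi lam : R) (f : nat -> R) : (2 <= n)%N ->
  eps * f 0%N + f 1%N = lam * f 0%N ->
  (forall m, (m.+2 < n)%N -> f m.+2 + f m = lam * f m.+1) ->
  phi * f n.-1 + f n.-2 = lam * f n.-1 ->
  forall i : 'I_n,
  dg n eps phi i * f i + (i.+1 < n)%:R * f i.+1 + (0 < i)%:R * f i.-1 = lam * f i.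
Proof.
move=> n2 H0 Hm Hl [[|m] /= hi].
  by rewrite /dg /= n2 mul1r mul0r addr0.
rewrite /dg /= mul1r.
case: (eqVneq m.+1 n.-1) => [e|ne].
  have en : n = m.+2 by rewrite -(ltn_predK n2) e.
  subst n; rewrite ltnn mul0r addr0; exact: Hl.
have hm : (m.+2 < n)%N.
  by rewrite ltn_neqAle hi andbT; apply: contra ne => /eqP <-.
by rewrite hm mul0r add0r mul1r; apply: Hm.
Qed.

Definition fcol (n : nat) (eps : R) (j i : nat) : R :=
  if j == 0%N then eps^-1 ^+ i
  else sin (i.+1%:R * theta R n j) - eps * sin (i%:R * theta R n j).

Lemma colV (n : nat) (eps : R) (j : 'I_n) :
  col j (Vmat n eps) = \col_(k < n) fcol n eps j k.
Proof. by apply/matrixP => i z; rewrite !mxE. Qed.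

Lemma alg_mid (e c s0 s1 s2 s3 : R) : s3 + s1 = 2*c*s2 -> s2 + s0 = 2*c*s1 ->
  (s3 - e*s2) + (s1 - e*s0) = 2*c*(s2 - e*s1).
Proof.
move=> h1 h2; have -> : s3 = 2*c*s2 - s1 by rewrite -h1; ring.
have -> : s0 = 2*c*s1 - s2 by rewrite -h2; ring.
ring.
Qed.

Lemma alg_last (e p c s0 s1 s2 : R) : e * p = 1 -> s2 = 0 -> s2 + s0 = 2*c*s1 ->
  p * (s2 - e*s1) + (s1 - e*s0) = 2*c*(s2 - e*s1).
Proof.
move=> he h2 h3; rewrite h2 add0r in h3 *; rewrite h3.
have -> : p * (0 - e * s1) = - (e * p) * s1 by ring.
rewrite he; ring.
Qed.

Lemma alg_first (e c s0 s1 s2 : R) : s0 = 0 -> s2 + s0 = 2*c*s1 ->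
  e*(s1 - e*s0) + (s2 - e*s1) = 2*c*(s1 - e*s0).
Proof. by move=> h0 h; rewrite h0 addr0 in h; rewrite h h0; ring. Qed.

Lemma alg_pow (e p x : R) : e * p = 1 -> p * (p * x) + x = (e + p) * (p * x).
Proof.
move=> h; have -> : (e + p) * (p * x) = (e * p) * x + p * (p * x) by ring.
rewrite h; ring.
Qed.

Lemma eig_col (n : nat) (eps phi : R) (j : 'I_n) :
  (2 <= n)%N -> 0 < eps -> eps * phi = 1 ->
  Tmat n eps phi *m col j (Vmat n eps) = eigval n eps j *: col j (Vmat n eps).
Proof.
move=> n2 e0 ep.
have pe : phi = eps^-1.
  by rewrite -[phi]mul1r -(mulVf (lt0r_neq0 e0)) -mulrA ep mulr1.
have p0 : phi != 0 by rewrite pe invr_eq0 lt0r_neq0.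
rewrite colV; apply/matrixP => i z; rewrite ord1 Tmul !mxE.
have [hj|hj] := eqVneq (j : nat) 0%N.
  apply: eig_gen => //; rewrite /fcol /eigval hj eqxx -pe.
  - by rewrite !expr0 expr1 !mulr1.
  - by move=> m hm; rewrite !exprS; apply: alg_pow.
  - case: n n2 i j hj => [|[|m]] // _ i j hj /=.
    by rewrite !exprS; apply: alg_pow.
apply: eig_gen => //; rewrite /fcol /eigval (negbTE hj).
- by apply: alg_first; [rewrite mul0r sin0 | exact: (sin_rec _ 0)].
- by move=> m hm; apply: alg_mid; apply: sin_rec.
- case: n n2 i j hj => [|[|m]] // _ i j hj /=.
  apply: alg_last => //; last by apply: sin_rec.
  by rewrite theta_n // sin_natpi.
Qed.

Lemma gt2 (eps : R) : 0 < eps -> eps != 1 -> 2 < eps + eps^-1.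
Proof.
move=> e0 e1; rewrite -subr_gt0.
have -> : eps + eps^-1 - 2 = (eps - 1) ^+ 2 / eps by field; rewrite lt0r_neq0.
by apply: divr_gt0 => //; rewrite lt0r sqrf_eq0 subr_eq0 e1 sqr_ge0.
Qed.

Lemma eigval_inj (n : nat) (eps : R) (j k : 'I_n) : 0 < eps -> eps != 1 ->
  eigval n eps j = eigval n eps k -> j = k.
Proof.
move=> e0 e1; rewrite /eigval.
have G := @gt2 eps e0 e1.
case: (eqVneq (j:nat) 0%N) => hj; case: (eqVneq (k:nat) 0%N) => hk.
- by move=> _; apply: ord_inj; rewrite hj hk.
- move=> h; exfalso.
  have := cos_le1 (theta R n k); rewrite h in G; lra.
- move=> h; exfalso.
  have := cos_le1 (theta R n j); rewrite -h in G; lra.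
move=> h.
have hc : cos (theta R n j) = cos (theta R n k).
  by apply: (mulfI (_ : (2:R) != 0)) => //.
have j0 : (0 < j)%N by rewrite lt0n.
have rj := @theta_range n j j0 (ltn_ord j).
have k0 : (0 < k)%N by rewrite lt0n.
have rk := @theta_range n k k0 (ltn_ord k).
have ht : theta R n j = theta R n k.
  apply: cos_inj => //; rewrite in_itv /=.
  - by case/andP: rj => a b; rewrite !ltW.
  - by case/andP: rk => a b; rewrite !ltW.
have n0 : (0 < n)%N by apply: leq_ltn_trans (ltn_ord j).
have hp : pi / n%:R != 0 :> R.
  by rewrite mulf_neq0 ?invr_eq0 ?pnatr_eq0 -?lt0n // lt0r_neq0 // pi_gt0.
move: ht; rewrite /theta -!mulrA => /(mulIf hp) /eqP; rewrite eqr_nat => /eqP h2.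
exact: ord_inj.
Qed.

Lemma V0_gt0 (n : nat) (eps : R) (i j : 'I_n) : (i : nat) = 0%N -> 0 < eps ->
  0 < Vmat n eps i j.
Proof.
move=> i0 e0; rewrite mxE i0.
case: (eqVneq (j:nat) 0%N) => hj; first by rewrite expr0.
rewrite mul0r sin0 mulr0 subr0 mul1r.
have j0 : (0 < j)%N by rewrite lt0n.
by apply: sin_gt0_pi; apply: theta_range.
Qed.

Lemma Tsym (n : nat) (eps phi : R) : (Tmat n eps phi)^T = Tmat n eps phi.
Proof.
apply/matrixP => i j; rewrite !mxE.
case: (eqVneq i j) => [->//|ne].
have ne' : (i : nat) != j by [].
by rewrite eq_sym (negbTE ne') orbC.
Qed.

Lemma ortho (n : nat) (eps phi : R) (j k : 'I_n) :
  (2 <= n)%N -> 0 < eps -> eps != 1 -> eps * phi = 1 -> j != k ->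
  \sum_(i < n) Vmat n eps i j * Vmat n eps i k = 0.
Proof.
move=> n2 e0 e1 ep jk.
set u := col j (Vmat n eps); set w := col k (Vmat n eps).
have Hu := @eig_col n eps phi j n2 e0 ep; have Hw := @eig_col n eps phi k n2 e0 ep.
have key : (eigval n eps j - eigval n eps k) *: (u^T *m w) = 0.
  rewrite scalerBl.
  have -> : eigval n eps j *: (u^T *m w) = (Tmat n eps phi *m u)^T *m w.
    by rewrite Hu linearZ /= scalemxAl.
  rewrite trmx_mul Tsym -mulmxA Hw -scalemxAr subrr //.
move/eqP: key; rewrite scaler_eq0 subr_eq0.
case: (eqVneq (eigval n eps j) (eigval n eps k)) => [h|_] /=.
  by move: jk; rewrite (@eigval_inj n eps j k e0 e1 h) eqxx.
move/eqP/matrixP/(_ 0 0) => h.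
transitivity ((u^T *m w) 0 0); last by rewrite h mxE.
rewrite mxE; apply: eq_bigr => i _; rewrite !mxE //.
Qed.

Lemma sumsq_gt0 (n : nat) (eps : R) (j : 'I_n) : 0 < eps ->
  0 < \sum_(i < n) Vmat n eps i j ^+ 2.
Proof.
move=> e0.
have n0 : (0 < n)%N by apply: leq_ltn_trans (ltn_ord j).
rewrite (bigD1 (Ordinal n0)) //=.
have ha : 0 < Vmat n eps (Ordinal n0) j ^+ 2 by apply: exprn_gt0; apply: V0_gt0.
have hb : 0 <= \sum_(i < n | i != Ordinal n0) Vmat n eps i j ^+ 2.
  by apply: sumr_ge0 => i _; apply: sqr_ge0.
lra.
Qed.

Lemma V_unit (n : nat) (eps phi : R) :
  (2 <= n)%N -> 0 < eps -> eps != 1 -> eps * phi = 1 -> Vmat n eps \in unitmx.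
Proof.
move=> n2 e0 e1 ep.
have D : (Vmat n eps)^T *m Vmat n eps =
    diag_mx (\row_j \sum_(i < n) Vmat n eps i j ^+ 2).
  apply/matrixP => j k; rewrite !mxE.
  case: (eqVneq j k) => [<-|ne].
    by rewrite mulr1n; apply: eq_bigr => i _; rewrite [_^T _ _]mxE expr2.
  rewrite mulr0n -[in RHS](@ortho n eps phi j k n2 e0 e1 ep ne).
  by apply: eq_bigr => i _; rewrite [_^T _ _]mxE.
have : \det ((Vmat n eps)^T *m Vmat n eps) != 0.
  rewrite D det_diag; apply/prodf_neq0 => j _; rewrite mxE.
  by rewrite lt0r_neq0 // sumsq_gt0.
by rewrite det_mulmx det_tr mulf_eq0 orbb unitmxE unitfE.
Qed.
End S.

Theorem mainTheorem11 (R : realType) (n : nat) (eps phi : R) :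
  (2 <= n)%N -> 0 < eps -> 0 < phi -> eps * phi = 1 -> eps != 1 ->
  [/\ (* the outlier eigenvalue and its eigenvector v = [phi^(i-1)] *)
      eps + eps^-1 = eps + phi /\ outlier (eps + eps^-1),
      (forall i j : 'I_n, (j == 0%N :> nat) -> Vmat n eps i j = phi ^+ i),
      (* each column of V is an eigenvector for the corresponding eigenvalue *)
      (forall j : 'I_n, col j (Vmat n eps) != 0 /\
         Tmat n eps phi *m col j (Vmat n eps) = eigval n eps j *: col j (Vmat n eps)),
      (* these are all the eigenpairs, up to scaling *)
      (forall (lam : R) (x : 'cV[R]_n), x != 0 -> Tmat n eps phi *m x = lam *: x ->
         exists (j : 'I_n) (c : R), lam = eigval n eps j /\ x = c *: col j (Vmat n eps))
    & (* diagonalization *)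
      Vmat n eps \in unitmx /\
      Tmat n eps phi = Vmat n eps *m Dmat n eps *m invmx (Vmat n eps)].
Proof.
move=> n2 e0 p0 ep e1.
have pe : phi = eps^-1.
  by rewrite -[phi]mul1r -(mulVf (lt0r_neq0 e0)) -mulrA ep mulr1.
have n0 : (0 < n)%N by apply: leq_trans n2.
have Vu := @V_unit R n eps phi n2 e0 e1 ep.
have TV : Tmat n eps phi *m Vmat n eps = Vmat n eps *m Dmat n eps.
  apply/matrixP => i j; rewrite /Dmat mul_mx_diag [RHS]mxE [X in _ * X]mxE.
  have := congr1 (fun M : 'cV[R]_n => M i 0) (@eig_col R n eps phi j n2 e0 ep).
  rewrite [RHS]mxE [col _ _ _ _]mxE mulrC => <-.
  rewrite [LHS]mxE [RHS]mxE; apply: eq_bigr => k _; rewrite [col _ _ _ _]mxE //.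
split.
- split; first by rewrite pe.
  rewrite /outlier => /andP[_ h]; have := @gt2 R eps e0 e1; lra.
- by move=> i j hj; rewrite mxE hj -pe.
- move=> j; split; last exact: (@eig_col R n eps phi j n2 e0 ep).
  apply/negP => /eqP h.
  have : col j (Vmat n eps) (Ordinal n0) 0 = 0 by rewrite h mxE.
  rewrite mxE => h0.
  by have := @V0_gt0 R n eps (Ordinal n0) j erefl e0; rewrite h0 ltxx.
- move=> lam x x0 hx.
  have [c xc] : exists c, x = Vmat n eps *m c by exists (invmx (Vmat n eps) *m x); rewrite mulKVmx.
  have Dc : Dmat n eps *m c = lam *: c.
    have : Vmat n eps *m (Dmat n eps *m c) = Vmat n eps *m (lam *: c).
      by rewrite mulmxA -TV -mulmxA -xc hx xc scalemxAr.
    by move/(congr1 (mulmx (invmx (Vmat n eps)))); rewrite !mulKmx.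
  have hc : forall j : 'I_n, (eigval n eps j - lam) * c j 0 = 0.
    move=> j; have := congr1 (fun M : 'cV[R]_n => M j 0) Dc.
    rewrite /Dmat mul_diag_mx [LHS]mxE [RHS]mxE [(\row__ _) _ _]mxE => h.
    by rewrite mulrBl h subrr.
  case: (pickP (fun j => c j 0 != 0)) => [j0 /= hj0 | hnone]; last first.
    exfalso; move/negP: x0; apply; apply/eqP.
    rewrite xc; have -> : c = 0; last by rewrite mulmx0.
    apply/matrixP => j z; rewrite ord1 mxE.
    by move: (hnone j) => /= /negbFE/eqP.
  have hl : lam = eigval n eps j0.
    move: (hc j0) => /eqP; rewrite mulf_eq0 (negbTE hj0) orbF subr_eq0.
    by move/eqP.
  exists j0, (c j0 0); split => //.
  rewrite xc; apply/matrixP => i z; rewrite ord1 [LHS]mxE [RHS]mxE [X in _ * X]mxE.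
  rewrite (bigD1 j0) //= big1 ?addr0; first by rewrite mulrC.
  move=> k hk.
  have : c k 0 = 0.
    move: (hc k) => /eqP; rewrite mulf_eq0 subr_eq0 => /orP[/eqP h|/eqP //].
    by move: hk; rewrite (@eigval_inj R n eps k j0 e0 e1 (etrans h hl)) eqxx.
  by move=> ->; rewrite mulr0.
- by split => //; rewrite -TV mulmxK.
Qed.
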